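(* There exists a sequence $\gamma(2),\gamma(3),\dots$ of nonnegative reals with $\gamma(k)\to 0$ exponentially as $k\to\infty$ (i.e. $\gamma(k)\le Cq^k$ for some constants $C>0$, $0<q<1$), such that for every $k\ge 2$ and every $k$-uniform cross intersecting matching $\mathcal A_1,\dots,\mathcal A_t$ of type $(d_1,\dots,d_t)$, $$\sum_{i=1}^t d_i(d_i-1)\le (1+\gamma(k))\binom{2k}{k}.$$
   Context: For integers $t,k\ge 2$, a family of hypergraphs $\mathcal A_1,\dots,\mathcal A_t$ is a $k$-uniform cross intersecting matching of size $t$ and type $(d_1,\dots,d_t)$ if each $d_i\ge 2$, each $\mathcal A_i$ consists of $d_i$ pairwise disjoint $k$-element sets, and $X\cap Y\neq\emptyset$ whenever $X\in\mathcal A_i$, $Y\in\mathcal A_j$, $1\le i\ne j\le t$. *)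

(* Defs.v *)
From HB Require Import structures.
From mathcomp Require Import all_boot all_order all_algebra.
From mathcomp Require Export reals.
Set Implicit Arguments. Unset Strict Implicit. Unset Printing Implicit Defensive.

(* Its type is (#|A_0|, ..., #|A_{t-1}|). *)
Definition cross_intersecting_matching (T : finType) (k t : nat)
    (A : 'I_t -> {set {set T}}) : Prop :=
  [/\ (2 <= t)%N, (2 <= k)%N, forall i, (2 <= #|A i|)%N
    & [/\ forall i X, X \in A i -> #|X| = k,
           forall i X Y, X \in A i -> Y \in A i -> X != Y -> [disjoint X & Y]
         & forall i j X Y, i != j -> X \in A i -> Y \in A j ->
             ~~ [disjoint X & Y]]].

(* Main.v *)
Require Import Defs.
From HB Require Import structures.
From mathcomp Require Import all_boot all_order all_algebra all_fingroup.
From mathcomp Require Import reals.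
From mathcomp Require Import zify ring lra.
Set Implicit Arguments. Unset Strict Implicit. Unset Printing Implicit Defensive.

Definition pos (T : finType) (s : {perm T}) (x : T) : nat := enum_rank (s x).
Definition ev (T : finType) (X Y : {set T}) (s : {perm T}) : bool :=
  [forall x in X, forall y in Y, pos s x < pos s y].
Definition evS (T : finType) (X Y : {set T}) := [set s | ev X Y s].

Lemma evP (T : finType) (X Y : {set T}) s :
  reflect (forall x y, x \in X -> y \in Y -> pos s x < pos s y) (ev X Y s).
Proof.
apply: (iffP forall_inP) => H.
  by move=> x y hx hy; move/forall_inP: (H x hx); apply.
by move=> x hx; apply/forall_inP => y hy; apply: H.
Qed.

Lemma pos_inj (T : finType) (s : {perm T}) : injective (pos s).
Proof.
move=> x y /= h; apply: (@perm_inj _ s); apply: enum_rank_inj; exact: val_inj.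
Qed.

Lemma pos_lt (T : finType) (s : {perm T}) x : pos s x < #|T|.
Proof. exact: ltn_ord. Qed.

Lemma imset_permK (T : finType) (p : {perm T}) (A : {set T}) :
  p^-1%g @: (p @: A) = A.
Proof.
rewrite -imset_comp; rewrite -[RHS]imset_id; apply: eq_imset => x /=.
by rewrite permK.
Qed.

Lemma mem_permset (T : finType) (p : {perm T}) (A : {set T}) x :
  (x \in p @: A) = (p^-1%g x \in A).
Proof. by rewrite -{1}(permKV p x) mem_imset //; apply: perm_inj. Qed.

Lemma ev_perm (T : finType) (p : {perm T}) (X Y : {set T}) :
  #|evS X Y| <= #|evS (p @: X) (p @: Y)|.
Proof.
rewrite -(card_imset (evS X Y) (mulgI p^-1%g)); apply: subset_leq_card.
apply/subsetP => _ /imsetP [s Hs ->]; rewrite inE; apply/evP.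
move=> _ _ /imsetP[x Hx ->] /imsetP[y Hy ->].
rewrite /pos !permM !permK.
by rewrite inE in Hs; move/evP: Hs; apply.
Qed.

Lemma ev_perm_eq (T : finType) (p : {perm T}) (X Y : {set T}) :
  #|evS (p @: X) (p @: Y)| = #|evS X Y|.
Proof.
apply/eqP; rewrite eqn_leq ev_perm andbT.
by have := ev_perm p^-1%g (p @: X) (p @: Y); rewrite !imset_permK.
Qed.

Lemma exists_perm (T : finType) (A B : {set T}) : #|A| = #|B| ->
  exists p : {perm T}, p @: A = B /\ forall x, x \notin A -> x \notin B -> p x = x.
Proof.
move: {2}#|A :\: B| (erefl #|A :\: B|) => m.
elim: m A => [|m IH] A Hm HAB.
  exists 1%g; split; last by move=> x _ _; rewrite perm1.
  have sAB : A \subset B by rewrite -setD_eq0 -cards_eq0 Hm.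
  have -> : A = B by apply/eqP; rewrite eqEcard sAB HAB leqnn.
  by rewrite -[RHS]imset_id; apply: eq_imset => x; rewrite perm1.
have [a Ha] : exists a, a \in A :\: B.
  by apply/set0Pn; rewrite -cards_eq0 Hm.
have [b Hb] : exists b, b \in B :\: A.
  apply/set0Pn; rewrite -cards_eq0.
  have h1 := cardsID B A; have h2 := cardsID A B.
  rewrite setIC in h2; apply/eqP => h0; rewrite h0 in h2. lia.
move: Ha Hb; rewrite !inE => /andP[naB aA] /andP[nbA bB].
set tau := tperm a b.
have Htau : forall x, x \in tau @: A = (tau x \in A).
  by move=> x; rewrite mem_permset tpermV.
have HA' : #|tau @: A| = #|B| by rewrite card_imset //; apply: perm_inj.
have Hm' : #|tau @: A :\: B| = m.
  have -> : tau @: A :\: B = (A :\: B) :\ a.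
    apply/setP => x; rewrite !inE Htau /tau.
    case: tpermP => [->|->|xa xb].
    - by rewrite eqxx (negbTE nbA) andbF.
    - by rewrite bB /= !andbF.
    - have -> : (x != a) = true by apply/eqP.
      by rewrite andbC.
  have := cardsD1 a (A :\: B); rewrite Hm !inE naB aA /=. lia.
have [p' [Hp'1 Hp'2]] := IH _ Hm' HA'.
exists (tau * p')%g; split.
  rewrite -Hp'1 -imset_comp; apply: eq_imset => x /=; by rewrite permM.
move=> x xA xB; rewrite permM.
have xa : a != x by apply: contraNneq xA => <-.
have xb : b != x by apply: contraNneq xB => <-.
have tx : tau x = x by rewrite /tau tpermD.
rewrite tx Hp'2 //; by rewrite Htau tx.
Qed.


Lemma card_sum (I : finType) (A : {set I}) (P : pred I) :
  #|[set i in A | P i]| = \sum_(i in A) (P i : nat).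
Proof.
rewrite -sum1_card [LHS]big_mkcond [RHS]big_mkcond; apply: eq_bigr => i _.
by rewrite inE; case: (i \in A); case: (P i).
Qed.

Lemma ivt (f : nat -> nat) N a : f 0 = 0 -> (forall c, f c.+1 <= (f c).+1) ->
  a <= f N -> exists c, f c = a.
Proof.
move=> f0 fS; elim: N => [|N IH] h.
  by exists 0; rewrite f0; move: h; rewrite f0; lia.
case: (leqP a (f N)) => h'; first exact: IH.
by exists N.+1; have := fS N; lia.
Qed.

Lemma ev_exists (T : finType) (Z : {set T}) a (s : {perm T}) : a <= #|Z| ->
  exists W : {set T}, [/\ W \subset Z, #|W| = a & ev W (Z :\: W) s].
Proof.
move=> haZ.
pose f c := #|[set z in Z | pos s z < c]|.
have f0 : f 0 = 0 by apply/eqP; rewrite cards_eq0; apply/eqP/setP => z; rewrite !inE andbF.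
have fS : forall c, f c.+1 <= (f c).+1.
  move=> c; rewrite /f.
  have sub : [set z in Z | pos s z < c.+1] \subset
             [set z in Z | pos s z < c] :|: [set z | pos s z == c].
    apply/subsetP => z; rewrite !inE ltnS leq_eqVlt => /andP[-> /orP[->|->]] //.
    by rewrite orbT.
  apply: (leq_trans (subset_leq_card sub)); rewrite cardsU.
  have h1 : #|[set z | pos s z == c]| <= 1.
    apply/card_le1_eqP => x y; rewrite !inE => /eqP hx /eqP hy.
    by apply: (@pos_inj _ s); rewrite hx hy.
  lia.
have fN : f #|T| = #|Z|.
  rewrite /f (_ : [set z in Z | pos s z < #|T|] = Z) //.
  by apply/setP => z; rewrite !inE pos_lt andbT.
have [c hc] : exists c, f c = a by apply: (ivt f0 fS (_ : a <= f #|T|)); rewrite fN.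
exists [set z in Z | pos s z < c]; split => //.
  by apply/subsetP => z; rewrite inE => /andP[].
apply/evP => x y; rewrite !inE => /andP[_ hx] /andP[hy hyZ].
move: hy; rewrite hyZ /= -leqNgt => hy; lia.
Qed.

Lemma ev_unique (T : finType) (Z W1 W2 : {set T}) (s : {perm T}) :
  W1 \subset Z -> W2 \subset Z -> #|W1| = #|W2| ->
  ev W1 (Z :\: W1) s -> ev W2 (Z :\: W2) s -> W1 = W2.
Proof.
move=> s1 s2 c12 /evP e1 /evP e2; apply/eqP; apply: contraT => neq.
have n12 : ~~ (W1 \subset W2).
  by apply: contra neq => h; rewrite eqEcard h c12 leqnn.
have n21 : ~~ (W2 \subset W1).
  by apply: contra neq => h; rewrite eq_sym eqEcard h c12 leqnn.
have [w1 h1 h1'] := subsetPn n12.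
have [w2 h2 h2'] := subsetPn n21.
have z1 : w1 \in Z by apply: (subsetP s1).
have z2 : w2 \in Z by apply: (subsetP s2).
have := e1 w1 w2 h1; rewrite inE h2' z2 => /(_ isT).
have := e2 w2 w1 h2; rewrite inE h1' z1 => /(_ isT).
lia.
Qed.

Lemma ev_count (T : finType) (X Y : {set T}) : [disjoint X & Y] ->
  #|evS X Y| * 'C(#|X :|: Y|, #|X|) = #|{perm T}|.
Proof.
move=> dXY.
set Z := X :|: Y; set a := #|X|.
set Ws := [set W : {set T} | W \subset Z & #|W| == a].
have cZ : #|Z| = #|X| + #|Y| by rewrite cardsU disjoint_setI0 // cards0 subn0.
have step1 : forall W, W \in Ws -> #|evS W (Z :\: W)| = #|evS X Y|.
  move=> W; rewrite inE => /andP[sWZ /eqP cW].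
  have [p [hp1 hp2]] : exists p : {perm T}, p @: X = W /\ forall x, x \notin X -> x \notin W -> p x = x.
    by apply: exists_perm; rewrite cW.
  have stab : forall x, x \in X :|: W -> p x \in X :|: W.
    move=> x hx; apply: contraT => hpx.
    have : p (p x) = p x by apply: hp2; move: hpx; rewrite !inE negb_or => /andP[].
    move/perm_inj => e; move: hpx; rewrite e hx.
    done.
  have hY : p @: Y = Z :\: W.
    apply/eqP; rewrite eqEcard; apply/andP; split.
      apply/subsetP => _ /imsetP[y hy ->]; rewrite inE; apply/andP; split.
        rewrite -hp1 (mem_imset _ _ (@perm_inj _ p)).
        by apply: contraL hy => hx; rewrite (disjointFr dXY hx).
      case hyXW : (y \in X :|: W).
        have := stab y hyXW; rewrite !inE => /orP[->|hw] //.
        by move: (subsetP sWZ _ hw); rewrite !inE.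
      rewrite hp2; first by rewrite !inE hy orbT.
        by move/negbT: hyXW; rewrite !inE negb_or => /andP[].
      by move/negbT: hyXW; rewrite !inE negb_or => /andP[].
    rewrite card_imset; last exact: perm_inj.
    rewrite cardsD (setIidPr sWZ) cZ cW /a; lia.
  by rewrite -hY -hp1 ev_perm_eq.
have step2 : forall s : {perm T}, \sum_(W in Ws) (s \in evS W (Z :\: W) : nat) = 1.
  move=> s; rewrite -card_sum.
  have [W0 [sW0 cW0 eW0]] : exists W : {set T}, [/\ W \subset Z, #|W| = a & ev W (Z :\: W) s].
    by apply: ev_exists; rewrite cZ /a; lia.
  rewrite (_ : [set W in Ws | s \in evS W (Z :\: W)] = [set W0]) ?cards1 //.
  apply/setP => W; rewrite !inE.
  apply/idP/eqP.
    move=> /andP[/andP[sW /eqP cW] eW].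
    by apply: (ev_unique sW sW0 _ eW eW0); rewrite cW cW0.
  by move=> ->; rewrite sW0 cW0 eqxx.
rewrite -(cards_draws Z a) -/Ws.
transitivity (\sum_(W in Ws) #|evS W (Z :\: W)|).
  by rewrite mulnC -sum_nat_const; apply: eq_bigr => W hW; rewrite step1.
transitivity (\sum_(W in Ws) \sum_(s : {perm T}) (s \in evS W (Z :\: W) : nat)).
  apply: eq_bigr => W _; rewrite -sum1_card big_mkcond; apply: eq_bigr => s _.
  by case: (s \in evS _ _).
rewrite exchange_big /= -sum1_card; apply: eq_bigr => s _; exact: step2.
Qed.


Lemma B3 (T : finType) k (U V : {set T}) :
  (#|U| = k /\ #|V| = 2 * k) \/ (#|U| = 2 * k /\ #|V| = k) ->
  #|evS U V| * 'C(3 * k, k) <= #|{perm T}|.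
Proof.
move=> hUV.
case: (boolP [disjoint U & V]) => dUV.
  have cU : #|U :|: V| = 3 * k.
    rewrite cardsU disjoint_setI0 // cards0 subn0; case: hUV => [[-> ->]|[-> ->]]; lia.
  have -> : 'C(3 * k, k) = 'C(#|U :|: V|, #|U|).
    rewrite cU; case: hUV => [[-> _]|[-> _]] //.
    rewrite -[in RHS]bin_sub; last lia.
    by rewrite (_ : 3 * k - 2 * k = k) //; lia.
  by rewrite ev_count.
rewrite (_ : evS U V = set0) ?cards0 //.
apply/setP => s; rewrite !inE; apply/negP => /evP e.
move: dUV; rewrite -setI_eq0 => /set0Pn [u]; rewrite inE => /andP[hu hv].
have := e u u hu hv; lia.
Qed.


Lemma cim_d (T : finType) k t (A : 'I_t -> {set {set T}}) :
  cross_intersecting_matching k A -> forall i, #|A i| <= k.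
Proof.
case=> ht hk hd [hc hdisj hcross] i.
have [j hj] : exists j, j \in [set~ i].
  by apply/set0Pn; rewrite -cards_eq0 cardsC1 card_ord; lia.
rewrite !inE eq_sym in hj.
have [Y hY] : exists Y, Y \in A j by apply/set0Pn; rewrite -cards_eq0; have := hd j; lia.
have [y0 hy0] : exists y, y \in Y by apply/set0Pn; rewrite -cards_eq0 (hc _ _ hY); lia.
pose f X := odflt y0 [pick x in X :&: Y].
have fP : forall X, X \in A i -> f X \in X :&: Y.
  move=> X hX; rewrite /f; case: pickP => [x hx|h0] //=.
  have := hcross _ _ _ _ hj hX hY; rewrite -setI_eq0 => /set0Pn [x hx].
  by have := h0 x; rewrite hx.
rewrite -(hc _ _ hY) -(card_in_imset (f := f)).
  apply: subset_leq_card; apply/subsetP => _ /imsetP[X hX ->].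
  by have := fP X hX; rewrite inE => /andP[].
move=> X1 X2 h1 h2 e; apply/eqP; apply: contraT => ne.
have := hdisj _ _ _ h1 h2 ne; rewrite -setI_eq0 => /eqP E.
have := fP X1 h1; have := fP X2 h2; rewrite -e !inE => /andP[a1 _] /andP[a2 _].
have : f X1 \in X1 :&: X2 by rewrite inE a1 a2.
by rewrite E inE.
Qed.

Definition evp (T : finType) t (s : {perm T}) (p : 'I_t * ({set T} * {set T})) :=
  ev p.2.1 p.2.2 s.
Definition Pset (T : finType) t (A : 'I_t -> {set {set T}}) :=
  [set p : 'I_t * ({set T} * {set T}) |
     [&& p.2.1 \in A p.1, p.2.2 \in A p.1 & p.2.1 != p.2.2]].

Lemma cross_no (T : finType) k t (A : 'I_t -> {set {set T}}) s p q :
  cross_intersecting_matching k A -> p \in Pset A -> q \in Pset A ->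
  p.1 != q.1 -> evp s p -> evp s q -> False.
Proof.
case=> ht hk hd [hc hdisj hcross].
case: p => i [X Y]; case: q => j [X' Y']; rewrite !inE /evp /=.
move=> /and3P[hX hY _] /and3P[hX' hY' _] nij /evP e1 /evP e2.
have := hcross _ _ _ _ nij hX hY'; rewrite -setI_eq0 => /set0Pn [x]; rewrite inE => /andP[x1 x2].
rewrite eq_sym in nij.
have := hcross _ _ _ _ nij hX' hY; rewrite -setI_eq0 => /set0Pn [y]; rewrite inE => /andP[y1 y2].
have := e1 _ _ x1 y2; have := e2 _ _ y1 x2; lia.
Qed.

Lemma fam_card (T : finType) k t (A : 'I_t -> {set {set T}}) i :
  cross_intersecting_matching k A ->
  #|[set p in Pset A | p.1 == i]| <= k * k.
Proof.
move=> h.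
have sub : [set p in Pset A | p.1 == i] \subset
           [set (i, u) | u in setX (A i) (A i)].
  apply/subsetP => -[j [X Y]]; rewrite !inE /= => /andP[/and3P[hX hY _] /eqP ej].
  subst j; apply/imsetP; exists (X, Y) => //; by rewrite inE hX hY.
apply: (leq_trans (subset_leq_card sub)); apply: (leq_trans (leq_imset_card _ _)).
by rewrite cardsX; apply: leq_mul; apply: cim_d.
Qed.

Lemma N_le_k2 (T : finType) k t (A : 'I_t -> {set {set T}}) s :
  cross_intersecting_matching k A ->
  #|[set p in Pset A | evp s p]| <= k * k.
Proof.
move=> h.
case: (set_0Vmem [set p in Pset A | evp s p]) => [->|[p0 hp0]]; first by rewrite cards0.
apply: leq_trans (fam_card p0.1 h); apply: subset_leq_card; apply/subsetP => p.
have memH : forall q, (q \in [set p in Pset A | evp s p]) = (q \in Pset A) && evp s q.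
  by move=> q; rewrite inE.
have memF : forall q, (q \in [set p in Pset A | p.1 == p0.1]) = (q \in Pset A) && (q.1 == p0.1).
  by move=> q; rewrite inE.
move: hp0; rewrite !memH memF => /andP[hp0 e0] /andP[hp ep]; rewrite hp /=.
apply: contraT => ne; exfalso; exact: (cross_no h hp hp0 ne ep e0).
Qed.

Lemma N_le_pairs (T : finType) t (A : 'I_t -> {set {set T}}) s :
  #|[set p in Pset A | evp s p]| <=
  1 + \sum_(p in Pset A) \sum_(q in Pset A) ((p != q) && evp s p && evp s q : nat).
Proof.
case: (set_0Vmem [set p in Pset A | evp s p]) => [->|[p0 hp0]]; first by rewrite cards0.
move: (hp0); rewrite inE => /andP[hP0 e0].
rewrite (bigD1 p0) //=.
have -> : \sum_(q in Pset A) ((p0 != q) && evp s p0 && evp s q : nat) =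
          #|[set q in Pset A | evp s q] :\ p0|.
  rewrite (_ : _ :\ p0 = [set q in Pset A | (q != p0) && evp s q]); last first.
    by apply/setP => q; rewrite !inE andbCA.
  rewrite (card_sum (Pset A) (fun q => (q != p0) && evp s q)); apply: eq_bigr => q _; by rewrite e0 andbT eq_sym.
have := cardsD1 p0 [set p in Pset A | evp s p]; rewrite hp0 /=; lia.
Qed.


Lemma single (T : finType) k t (A : 'I_t -> {set {set T}}) p :
  cross_intersecting_matching k A -> p \in Pset A ->
  #|evS p.2.1 p.2.2| * 'C(2 * k, k) = #|{perm T}|.
Proof.
case=> ht hk hd [hc hdisj hcross].
case: p => i [X Y]; rewrite !inE /= => /and3P[hX hY ne].
have dXY := hdisj _ _ _ hX hY ne.
rewrite -(ev_count dXY) cardsU disjoint_setI0 // cards0 subn0 (hc _ _ hX) (hc _ _ hY).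
by rewrite (_ : k + k = 2 * k) //; lia.
Qed.

Lemma ev_dich (T : finType) (X Y X' Y' : {set T}) s :
  ev X Y s -> ev X' Y' s -> ev X Y' s || ev X' Y s.
Proof.
move=> /evP e1 /evP e2.
case: (boolP (ev X Y' s)) => //= /forall_inPn [x hx /forall_inPn [y' hy' hxy']].
apply/evP => x' y hx' hy; rewrite ltnNge; apply/negP => h.
have := e1 x y hx hy; have := e2 x' y' hx' hy'; move: hxy' h; lia.
Qed.

Lemma ev_union (T : finType) (X Y Y' : {set T}) s :
  ev X Y s -> ev X Y' s -> ev X (Y :|: Y') s.
Proof.
move=> /evP e1 /evP e2; apply/evP => x y hx; rewrite inE => /orP[hy|hy].
  exact: e1. exact: e2.
Qed.

Lemma ev_unionl (T : finType) (X X' Y : {set T}) s :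
  ev X Y s -> ev X' Y s -> ev (X :|: X') Y s.
Proof.
move=> /evP e1 /evP e2; apply/evP => x y; rewrite inE => /orP[hx|hx] hy.
  exact: e1. exact: e2.
Qed.

Lemma J_bound (T : finType) k t (A : 'I_t -> {set {set T}}) p q :
  cross_intersecting_matching k A -> p \in Pset A -> q \in Pset A -> p != q ->
  #|[set s | evp s p && evp s q]| * 'C(3 * k, k) <= 2 * #|{perm T}| * (p.1 == q.1).
Proof.
move=> h hp hq npq.
case: (eqVneq p.1 q.1) => e; last first.
  rewrite (_ : [set s | evp s p && evp s q] = set0) ?cards0 //.
  apply/setP => s; rewrite !inE; apply/negP => /andP[ep eq].
  exact: (cross_no h hp hq e ep eq).
rewrite muln1.
case: h => ht hk hd [hc hdisj hcross].
move: hp hq npq e; case: p => i [X Y]; case: q => j [X' Y'].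
rewrite !inE /= => /and3P[hX hY nXY] /and3P[hX' hY' nXY'] npq e; subst j.
case: (eqVneq Y Y') => eY.
  subst Y'.
  have nX : X != X' by apply: contraNneq npq => ->.
  have cU : #|X :|: X'| = 2 * k.
    rewrite cardsU (disjoint_setI0 (hdisj _ _ _ hX hX' nX)) cards0 subn0 (hc _ _ hX) (hc _ _ hX'); lia.
  have sub : [set s | evp s (i, (X, Y)) && evp s (i, (X', Y))] \subset evS (X :|: X') Y.
    apply/subsetP => s; rewrite !inE /evp /= => /andP[e1 e2]; exact: ev_unionl.
  have := B3 (_ : (#|X :|: X'| = k /\ #|Y| = 2 * k) \/ (#|X :|: X'| = 2 * k /\ #|Y| = k)).
  rewrite cU (hc _ _ hY) => /(_ (or_intror (conj erefl erefl))) hb.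
  have := subset_leq_card sub => hs.
  apply: leq_trans (_ : #|evS (X :|: X') Y| * 'C(3 * k, k) <= _); last lia.
  by rewrite leq_mul2r hs orbT.
have cU : #|Y :|: Y'| = 2 * k.
  rewrite cardsU (disjoint_setI0 (hdisj _ _ _ hY hY' eY)) cards0 subn0 (hc _ _ hY) (hc _ _ hY'); lia.
have sub : [set s | evp s (i, (X, Y)) && evp s (i, (X', Y'))] \subset
           evS X (Y :|: Y') :|: evS X' (Y :|: Y').
  apply/subsetP => s; rewrite !inE /evp /= => /andP[e1 e2].
  case/orP: (ev_dich e1 e2) => e3.
    by rewrite ev_union.
  by rewrite orbC -setUC ev_union.
have b1 : #|evS X (Y :|: Y')| * 'C(3 * k, k) <= #|{perm T}|.
  by apply: B3; left; rewrite cU (hc _ _ hX).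
have b2 : #|evS X' (Y :|: Y')| * 'C(3 * k, k) <= #|{perm T}|.
  by apply: B3; left; rewrite cU (hc _ _ hX').
have hs := subset_leq_card sub.
have hU := leq_card_setU (evS X (Y :|: Y')) (evS X' (Y :|: Y')).
apply: leq_trans (leq_mul (leq_trans hs hU) (leqnn 'C(3 * k, k))) _.
rewrite mulnDl; lia.
Qed.


Lemma card_sumT (I : finType) (P : pred I) :
  #|[set i | P i]| = \sum_i (P i : nat).
Proof.
rewrite -sum1dep_card big_mkcond; apply: eq_bigr => i _; by case: (P i).
Qed.

Lemma Pset_card (T : finType) t (A : 'I_t -> {set {set T}}) :
  #|Pset A| = \sum_(i < t) #|A i| * (#|A i| - 1).
Proof.
rewrite /Pset card_sumT.
rewrite -(pair_big xpredT xpredT (fun i (u : {set T} * {set T}) =>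
   ([&& u.1 \in A i, u.2 \in A i & u.1 != u.2] : nat))) /=.
apply: eq_bigr => i _.
rewrite -(pair_big xpredT xpredT (fun (X Y : {set T}) =>
   ([&& X \in A i, Y \in A i & X != Y] : nat))) /=.
rewrite (bigID (fun X => X \in A i)) /= [X in _ + X]big1; last first.
  by move=> X /negbTE hX; apply: big1 => Y _; rewrite hX.
rewrite addn0 -sum_nat_const; apply: eq_bigr => X hX.
rewrite hX /= -card_sumT.
have -> : [set Y | (Y \in A i) && (X != Y)] = A i :\ X.
  by apply/setP => Y; rewrite !inE andbC eq_sym.
by have := cardsD1 X (A i); rewrite hX add1n => ->; rewrite subn1.
Qed.

Lemma perm_gt0 (T : finType) : 0 < #|{perm T}|.
Proof. by apply/card_gt0P; exists 1%g. Qed.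

Lemma main_nat (T : finType) k t (A : 'I_t -> {set {set T}}) :
  cross_intersecting_matching k A ->
  'C(3 * k, k) * #|Pset A| <=
    'C(2 * k, k) * 'C(3 * k, k) + 2 * k ^ 4 * 'C(2 * k, k) ^ 2.
Proof.
move=> h.
set M := #|{perm T}|; set C2 := 'C(2 * k, k); set C3 := 'C(3 * k, k).
set N := #|Pset A|.
set Sg := \sum_(s : {perm T}) #|[set p in Pset A | evp s p]|.
have hM : 0 < M := perm_gt0 T.
have Sg_eq : Sg = \sum_(p in Pset A) #|evS p.2.1 p.2.2|.
  rewrite /Sg (eq_bigr (fun s => \sum_(p in Pset A) (evp s p : nat))); last first.
    by move=> s _; rewrite (card_sum (Pset A) (evp s)).
  rewrite exchange_big /=; apply: eq_bigr => p _; rewrite /evS card_sumT.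
  by apply: eq_bigr.
have ha : C2 * Sg = N * M.
  rewrite Sg_eq big_distrr /= /N -sum_nat_const; apply: eq_bigr => p hp.
  by rewrite mulnC (single h hp).
have hb : Sg <= M * (k * k).
  rewrite /M -sum_nat_const; apply: leq_sum => s _; exact: N_le_k2.
have hN : N <= C2 * (k * k).
  have : N * M <= C2 * (M * (k * k)) by rewrite -ha leq_mul2l hb orbT.
  rewrite mulnCA [N * M]mulnC leq_pmul2l //.
have hc : C3 * Sg <= C3 * M + 2 * M * (k * k) * N.
  have e1 : Sg <= M + \sum_(p in Pset A) \sum_(q in Pset A)
      \sum_(s : {perm T}) ((p != q) && evp s p && evp s q : nat).
    have e0 : Sg <= \sum_(s : {perm T}) (1 + \sum_(p in Pset A) \sum_(q in Pset A)
        ((p != q) && evp s p && evp s q : nat)).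
      by apply: leq_sum => s _; exact: N_le_pairs.
    apply: leq_trans e0 _.
    rewrite big_split /= sum1_card.
    rewrite leq_add2l.
    rewrite exchange_big /=; apply: leq_sum => p _.
    by rewrite exchange_big.
  apply: leq_trans (leq_mul (leqnn C3) e1) _.
  rewrite mulnDr leq_add2l big_distrr /=.
  have e2 : forall p, p \in Pset A ->
    C3 * (\sum_(q in Pset A) \sum_(s : {perm T}) ((p != q) && evp s p && evp s q : nat))
      <= 2 * M * (k * k).
    move=> p hp; rewrite big_distrr /=.
    apply: leq_trans (_ : 2 * M * \sum_(q in Pset A) (p.1 == q.1 : nat) <= _).
      rewrite big_distrr /=.
      apply: leq_sum => q hq.
      case: (eqVneq p q) => [->|npq].
        by rewrite big1 ?muln0 // => s _; rewrite eqxx.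
      apply: leq_trans (J_bound h hp hq npq).
      rewrite mulnC leq_mul2r -card_sumT; apply/orP; right.
      by apply: subset_leq_card; apply/subsetP => s; rewrite !inE.
    rewrite leq_mul2l; apply/orP; right.
    rewrite -card_sum.
    apply: leq_trans (fam_card p.1 h); apply: subset_leq_card; apply/subsetP => q.
    by rewrite !inE => /andP[-> e]; rewrite eq_sym.
  apply: leq_trans (_ : \sum_(p in Pset A) 2 * M * (k * k) <= _).
    by apply: leq_sum.
  by rewrite sum_nat_const mulnC.
have hd : M * (C3 * N) <= M * (C2 * C3 + 2 * (k * k) * N * C2).
  have : C2 * (C3 * Sg) <= C2 * (C3 * M + 2 * M * (k * k) * N) by rewrite leq_mul2l hc orbT.
  rewrite mulnCA ha.
  have -> : C2 * (C3 * M + 2 * M * (k * k) * N) = M * (C2 * C3 + 2 * (k * k) * N * C2) by ring.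
  by rewrite (_ : C3 * (N * M) = M * (C3 * N)) //; ring.
rewrite leq_pmul2l // in hd.
apply: leq_trans hd _; rewrite leq_add2l.
have : 2 * (k * k) * N * C2 <= 2 * (k * k) * (C2 * (k * k)) * C2.
  by rewrite leq_mul2r leq_mul2l hN !orbT.
by rewrite (_ : 2 * (k * k) * (C2 * (k * k)) * C2 = 2 * k ^ 4 * C2 ^ 2) //; ring.
Qed.


Lemma fact_ineq k : ((2 * k)`!) ^ 2 * 3 ^ k <= (3 * k)`! * k`! * 2 ^ k.
Proof.
elim: k => [|k IH]; first by [].
rewrite (_ : 2 * k.+1 = (2 * k).+2); last lia.
rewrite (_ : 3 * k.+1 = (3 * k).+3); last lia.
rewrite !factS.
set a := (2 * k)`!; set b := (3 * k)`!; set c := k`!.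
have hc : 3 * ((2 * k).+2 * (2 * k).+1) ^ 2 <=
          2 * ((3 * k).+3 * ((3 * k).+2 * (3 * k).+1) * k.+1) by nia.
have H := leq_mul hc IH.
rewrite [3 ^ k.+1]expnS [2 ^ k.+1]expnS.
apply: (@leq_trans (3 * ((2 * k).+2 * (2 * k).+1) ^ 2 * (a ^ 2 * 3 ^ k))).
  by rewrite leq_eqVlt; apply/orP; left; apply/eqP; ring.
apply: leq_trans H _.
by rewrite leq_eqVlt; apply/orP; left; apply/eqP; ring.
Qed.

Lemma ratio k : 'C(2 * k, k) * 3 ^ k <= 'C(3 * k, k) * 2 ^ k.
Proof.
have h2 : 'C(2 * k, k) * (k`! * (2 * k - k)`!) = (2 * k)`! by apply: bin_fact; lia.
have h3 : 'C(3 * k, k) * (k`! * (3 * k - k)`!) = (3 * k)`! by apply: bin_fact; lia.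
have e2 : 2 * k - k = k by lia. have e3 : 3 * k - k = 2 * k by lia.
rewrite e2 in h2; rewrite e3 in h3.
have hK : 0 < k`! * k`! * (2 * k)`! by rewrite !muln_gt0 !fact_gt0.
rewrite -(leq_pmul2r hK).
have EL : 'C(2 * k, k) * 3 ^ k * (k`! * k`! * (2 * k)`!) = ((2 * k)`!) ^ 2 * 3 ^ k.
  have G : forall a b c d, a * b * (c * c * d) = a * (c * c) * d * b by move=> *; ring.
  by rewrite G h2 [_ ^ 2]expnS expn1.
have ER : 'C(3 * k, k) * 2 ^ k * (k`! * k`! * (2 * k)`!) = (3 * k)`! * k`! * 2 ^ k.
  have G' : forall a b c d, a * b * (c * c * d) = a * (c * d) * c * b by move=> *; ring.
  by rewrite G' h3.
rewrite EL ER; exact: fact_ineq.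
Qed.

Import Order.TTheory GRing.Theory Num.Theory.
Local Open Scope ring_scope.

Lemma bern (R : realType) (x : R) n : 0 <= x -> 1 + n%:R * x <= (1 + x) ^+ n.
Proof.
move=> hx; elim: n => [|n IH]; first by rewrite mul0r addr0 expr0.
rewrite exprS -natr1.
have hn : 0 <= n%:R :> R by apply: ler0n.
have h1 : 0 <= 1 + x by lra.
have hb : 0 <= 1 + n%:R * x by have := mulr_ge0 hn hx; lra.
have H := ler_pM h1 hb (lexx (1 + x)) IH.
have := mulr_ge0 (mulr_ge0 hn hx) hx; nra.
Qed.

Lemma klin (R : realType) (k : nat) : (k%:R : R) <= 10 * (11 / 10) ^+ k.
Proof.
have h0 : 0 <= 1 / 10 :> R by lra.
have := bern k h0; rewrite (_ : 1 + 1 / 10 = 11 / 10 :> R); last lra.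
have := exprn_ge0 k (_ : 0 <= 11 / 10 :> R).
move=> /(_ _) H1; have H2 := H1 ltac:(lra).
have := ler0n R k. lra.
Qed.

Lemma gamma_bound (R : realType) (k : nat) :
  ((2 * k ^ 4 * 'C(2 * k, k))%:R / ('C(3 * k, k))%:R : R)
    <= (2 * 10 ^+ 4) * ((2 / 3) * (11 / 10) ^+ 4) ^+ k.
Proof.
have hC3 : 0 < ('C(3 * k, k))%:R :> R by rewrite ltr0n bin_gt0; lia.
have h1 : ('C(2 * k, k))%:R / ('C(3 * k, k))%:R <= (2 / 3 : R) ^+ k.
  rewrite ler_pdivrMr // expr_div_n.
  have h3k : 0 < (3 : R) ^+ k by apply: exprn_gt0.
  rewrite mulrAC ler_pdivlMr //.
  have := ratio k; rewrite -(ler_nat R) !natrM !natrX.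
  by rewrite [_ * _%:R]mulrC.
have h2 : (k%:R : R) ^+ 4 <= (10 * (11 / 10) ^+ k) ^+ 4.
  rewrite ler_pXn2r //; first exact: klin.
    by rewrite nnegrE ler0n.
  rewrite nnegrE; by apply: mulr_ge0; [lra | apply: exprn_ge0; lra].
rewrite (_ : ((2 * k ^ 4 * 'C(2 * k, k))%:R / ('C(3 * k, k))%:R : R) =
   (2 * (k%:R) ^+ 4) * (('C(2 * k, k))%:R / ('C(3 * k, k))%:R)); last first.
  rewrite !natrM; ring.
have e : (2 * 10 ^+ 4) * ((2 / 3) * (11 / 10) ^+ 4) ^+ k =
         (2 * (10 * (11 / 10) ^+ k) ^+ 4) * (2 / 3 : R) ^+ k.
  rewrite exprMn [(10 * _) ^+ 4]exprMn -!exprM (mulnC 4 k).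
  ring.
rewrite e; apply: ler_pM => //.
- by apply: mulr_ge0; [lra | apply: exprn_ge0; apply: ler0n].
- by apply: divr_ge0; apply: ler0n.
- by rewrite ler_pM2l //; lra.
Qed.


Theorem lemma2p1 (R : realType) :
  exists gamma : nat -> R,
    (forall k, (2 <= k)%N -> 0 <= gamma k) /\
    (exists C q : R, 0 < C /\ 0 < q /\ q < 1 /\
       forall k, (2 <= k)%N -> gamma k <= C * q ^+ k) /\
    (forall (k t : nat) (T : finType) (A : 'I_t -> {set {set T}}),
       (2 <= k)%N ->
       cross_intersecting_matching k A ->
       (\sum_(i < t) (#|A i| * (#|A i| - 1))%:R : R)
         <= (1 + gamma k) * ('C(2 * k, k))%:R).
Proof.
exists (fun k => ((2 * k ^ 4 * 'C(2 * k, k))%:R / ('C(3 * k, k))%:R : R)).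
split; first by move=> k _; apply: divr_ge0; apply: ler0n.
split.
  exists (2 * 10 ^+ 4), ((2 / 3) * (11 / 10) ^+ 4).
  split; first by rewrite !exprS expr0; lra.
  split; first by rewrite !exprS expr0; lra.
  split; first by rewrite !exprS expr0; lra.
  by move=> k _; apply: gamma_bound.
move=> k t T A hk h.
rewrite -natr_sum -Pset_card.
have hC3 : 0 < ('C(3 * k, k))%:R :> R by rewrite ltr0n bin_gt0; lia.
have key := main_nat h.
rewrite -(ler_nat R) !natrD !natrM in key.
rewrite -(ler_pM2r hC3).
have -> : (1 + (2 * k ^ 4 * 'C(2 * k, k))%:R / ('C(3 * k, k))%:R) * ('C(2 * k, k))%:R
           * ('C(3 * k, k))%:R =
          ('C(2 * k, k))%:R * ('C(3 * k, k))%:R + 2%:R * (k%:R) ^+ 4 * ('C(2 * k, k))%:R ^+ 2 :> R.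
  rewrite !natrM; field.
  by rewrite lt0r_neq0.
lra.
Qed.
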